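(* $\mathrm{nM}([2]) = \mathrm{nM}(\mathrm{N}) = \mathrm{N}$, where $[2]$ denotes the function $f : \mathbb{N} \to \mathbb{N}\cup\{+\infty\}$ with $f(1) = 2$ and $f(k) = +\infty$ for $k \ge 2$.
   Context: $\mathrm{N} : \mathbb{N} \to \mathbb{N}$ is defined by $\mathrm{N}(1) = 2$ and $\mathrm{N}(k) = \max_{i \in \{2,\dots,k\}} \min(2i, \mathrm{N}(k-i+1)+i)$ for $k \ge 2$. For a function $g : \mathbb{N} \to \mathbb{N} \cup \{+\infty\}$ and $k \ge 2$, $m \ge 4$, let $\mathrm{pdp}_g(k,m)$ be the set of pairs $(e_0,e_1) \in \mathbb{N}^2$ with (i) $e_0, e_1 \ge 2$; (ii) $e_0, e_1 \le k$; (iii) $e_0 + e_1 = m$; (iv) $e_0 \le e_1$; (v) $g(k - e_\varepsilon + 1) + e_\varepsilon \ge m$ for both $\varepsilon \in \{0,1\}$ (this only depends on the values $g(k')$ for $k' < k$). For $f : \mathbb{N} \to \mathbb{N} \cup \{+\infty\}$ with $f(1) = 2$, the function $f' = \mathrm{nM}(f)$ is defined recursively: $f'(1) = 2$, and for $k > 1$, with $m$ the largest integer in $\{4, \dots, 2k\}$ such that $\mathrm{pdp}_{f'}(k,m) \ne \emptyset$ (using the already defined values $f'(k')$, $k' < k$; note $(2,2) \in \mathrm{pdp}_{f'}(k,4)$), set $f'(k) = \min(m, f(k))$. *)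

(* Defs.v *)
From mathcomp Require Import all_boot.
Set Implicit Arguments. Unset Strict Implicit. Unset Printing Implicit Defensive.

(* N ∪ {+oo} : [Some n] is the finite value n, [None] is +oo. *)
Definition natinf := option nat.

(* Course-of-values recursion on nat: [step g k] computes the value at k,
   where it may only use [g k'] for k' < k.  [tab step n] lists the
   values at 0, ..., n-1; [crec step k] is the value at k. *)
Fixpoint tab (T : Type) (d : T) (step : (nat -> T) -> nat -> T) (n : nat)
  : seq T :=
  match n with
  | 0 => [::]
  | n'.+1 => let s := tab d step n' in rcons s (step (fun j => nth d s j) n')
  end.

Definition crec (T : Type) (d : T) (step : (nat -> T) -> nat -> T) (k : nat)
  : T := nth d (tab d step k.+1) k.

(* The function N (domain: positive integers; the value at 0 is irrelevant):
   N(1) = 2, N(k) = max_{i in {2..k}} min(2i, N(k-i+1)+i) for k >= 2. *)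
Definition N_step (g : nat -> nat) (k : nat) : nat :=
  if k <= 1 then 2
  else \max_(2 <= i < k.+1) minn (2 * i) (g (k - i + 1) + i).

Definition Nfun : nat -> nat := crec 0 N_step.

Definition cond_v (g : nat -> natinf) (k m e : nat) : bool :=
  match g (k - e + 1) with
  | None => true                 (* +oo + e >= m *)
  | Some v => m <= v + e
  end.

Definition pdp (g : nat -> natinf) (k m e0 e1 : nat) : bool :=
  [&& 2 <= e0, 2 <= e1, e0 <= k, e1 <= k, e0 + e1 == m, e0 <= e1,
      cond_v g k m e0 & cond_v g k m e1].

(* pdp_g(k,m) is nonempty (any element has e0, e1 <= m) *)
Definition pdp_ne (g : nat -> natinf) (k m : nat) : bool :=
  has (fun e0 => has (fun e1 => pdp g k m e0 e1) (iota 0 m.+1)) (iota 0 m.+1).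

Definition max_m (g : nat -> natinf) (k : nat) : nat :=
  \max_(4 <= m < (2 * k).+1 | pdp_ne g k m) m.

Definition minf (m : nat) (x : natinf) : natinf :=
  match x with None => Some m | Some v => Some (minn m v) end.

Definition nM_step (f : nat -> natinf) (g : nat -> natinf) (k : nat) : natinf :=
  if k <= 1 then Some 2 else minf (max_m g k) (f k).

Definition nM (f : nat -> natinf) : nat -> natinf := crec None (nM_step f).

Definition two_fun (k : nat) : natinf := if k == 1 then Some 2 else None.

(* Main.v *)
Require Import Defs.
From mathcomp Require Import all_boot.
From mathcomp Require Import zify.

Lemma size_tab (T : Type) (d : T) step n : size (tab d step n) = n.
Proof. by elim: n => //= n IH; rewrite size_rcons IH. Qed.

Lemma tab_prefix (T : Type) (d : T) step n j :
  j < n -> nth d (tab d step n) j = crec d step j.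
Proof.
elim: n => // n IH hj /=; rewrite nth_rcons size_tab.
case: (ltnP j n) => h; first by apply: IH.
have -> : j = n by lia.
by rewrite eqxx /crec /= nth_rcons size_tab ltnn eqxx.
Qed.

Lemma crec_eq (T : Type) (d : T) step k :
  crec d step k = step (fun j => nth d (tab d step k) j) k.
Proof. by rewrite /crec /= nth_rcons size_tab ltnn eqxx. Qed.

Lemma crec_unfold (T : Type) (d : T) step k :
  (forall g g', (forall j, 1 <= j < k -> g j = g' j) -> step g k = step g' k) ->
  crec d step k = step (crec d step) k.
Proof.
move=> H; rewrite crec_eq; apply: H => j hj; apply: tab_prefix; lia.
Qed.

Lemma N_step_cong k g g' :
  (forall j, 1 <= j < k -> g j = g' j) -> N_step g k = N_step g' k.
Proof.
move=> H; rewrite /N_step; case: (k <= 1) => //.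
apply: eq_big_seq => i; rewrite mem_index_iota => hi.
rewrite H //; lia.
Qed.

Lemma Nrec k : Nfun k = N_step Nfun k.
Proof. apply: crec_unfold => g g'; exact: N_step_cong. Qed.

Lemma pdp_cong g g' k m e0 e1 :
  (forall j, 1 <= j < k -> g j = g' j) -> pdp g k m e0 e1 = pdp g' k m e0 e1.
Proof.
move=> H.
have C : forall e, 2 <= e -> e <= k -> cond_v g k m e = cond_v g' k m e.
  by move=> e h1 h2; rewrite /cond_v H //; lia.
rewrite /pdp; case: (leqP 2 e0) => //= h0; case: (leqP 2 e1) => //= h1.
case: (leqP e0 k) => //= h2; case: (leqP e1 k) => //= h3.
by rewrite C // C.
Qed.

Lemma max_m_cong g g' k :
  (forall j, 1 <= j < k -> g j = g' j) -> max_m g k = max_m g' k.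
Proof.
move=> H; rewrite /max_m; apply: eq_bigl => m; rewrite /pdp_ne.
apply: eq_has => e0; apply: eq_has => e1; exact: pdp_cong.
Qed.

Lemma nMrec f k : nM f k = nM_step f (nM f) k.
Proof.
apply: crec_unfold => g g' H; rewrite /nM_step; case: (k <= 1) => //.
by rewrite (@max_m_cong g g' k H).
Qed.

Lemma bigmax_ex (r : seq nat) (F : nat -> nat) :
  \max_(j <- r) F j = 0 \/ exists2 i, i \in r & \max_(j <- r) F j = F i.
Proof.
elim: r => [|a r IH]; first by left; rewrite big_nil.
right; rewrite big_cons; case: IH => [->|[i hi ->]].
  by exists a; rewrite ?mem_head ?maxn0.
case: (leqP (F i) (F a)) => h.
  by exists a; rewrite ?mem_head //; lia.
by exists i; rewrite ?inE ?hi ?orbT //; lia.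
Qed.

Lemma N_arg k : 2 <= k -> exists i, 2 <= i <= k /\
  Nfun k = minn (2 * i) (Nfun (k - i + 1) + i).
Proof.
move=> hk; rewrite Nrec /N_step ifN; last by rewrite -ltnNge.
case: (bigmax_ex (index_iota 2 k.+1) (fun i => minn (2 * i) (Nfun (k - i + 1) + i))).
  move=> h0; exfalso.
  have := @leq_bigmax_seq _ (index_iota 2 k.+1) xpredT
    (fun i => minn (2 * i) (Nfun (k - i + 1) + i)) 2.
  rewrite mem_index_iota h0 => /(_ ltac:(lia) isT); lia.
by move=> [i]; rewrite mem_index_iota => hi ->; exists i; split => //; lia.
Qed.

Lemma N_le k i : 2 <= i <= k -> minn (2 * i) (Nfun (k - i + 1) + i) <= Nfun k.
Proof.
move=> hi; rewrite (Nrec k) /N_step ifN; last by apply/negP; lia.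
apply: (@leq_bigmax_seq _ (index_iota 2 k.+1) xpredT
    (fun i => minn (2 * i) (Nfun (k - i + 1) + i)) i) => //.
rewrite mem_index_iota; lia.
Qed.

Lemma N_ge2 k : 1 <= k -> 2 <= Nfun k.
Proof.
move=> hk; case: (leqP k 1) => h.
  by have -> : k = 1 by lia.
have := N_le k 2 ltac:(lia); lia.
Qed.

Lemma N_inc j : 1 <= j -> Nfun j < Nfun j.+1.
Proof.
move=> hj; case: (leqP j 1) => h.
  have -> : j = 1 by lia.
  have := N_le 2 2 isT; rewrite (_ : Nfun 1 = 2) //; lia.
have [i [hi ->]] := N_arg j h.
have := N_le j.+1 i.+1 ltac:(lia).
by rewrite subSS; lia.
Qed.

Lemma N_add a d : 1 <= a -> Nfun a + d <= Nfun (a + d).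
Proof.
move=> ha; elim: d => [|d IH]; first by rewrite !addn0.
have := N_inc (a + d) ltac:(lia); rewrite (addnS a d); lia.
Qed.

Lemma core k : 2 <= k -> max_m (fun j => Some (Nfun j)) k = Nfun k.
Proof.
move=> hk; apply/eqP; rewrite eqn_leq; apply/andP; split.
  apply/bigmax_leqP_seq => m _ /hasP [e0 _ /hasP [e1 _]].
  rewrite /pdp /cond_v => /and5P [h1 h2 h3 h4 /and4P [/eqP h5 h6 h7 h8]].
  have := N_le k e1 ltac:(lia); lia.
have [i [hi E]] := N_arg k hk.
have g1 := N_ge2 (k - i + 1) ltac:(lia).
set m := Nfun k in E *.
apply: (@leq_bigmax_seq _ (index_iota 4 (2 * k).+1) _ (fun m => m) m).
  rewrite mem_index_iota; lia.
apply/hasP; exists (m - i); first by rewrite mem_iota; lia.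
apply/hasP; exists i; first by rewrite mem_iota; lia.
rewrite /pdp /cond_v.
have hA := N_add (k - i + 1) (i - (m - i)) ltac:(lia).
rewrite (_ : k - i + 1 + (i - (m - i)) = k - (m - i) + 1) in hA; [|lia].
have -> : m - i + i == m by apply/eqP; lia.
rewrite /=; apply/and5P; split; try (apply/idP; lia); apply/and4P; split => //; apply/idP; lia.
Qed.

Theorem theorem13p15 :
  forall k : nat, 1 <= k ->
    nM two_fun k = nM (fun j => Some (Nfun j)) k /\
    nM (fun j => Some (Nfun j)) k = Some (Nfun k).
Proof.
have key : forall F, (F = two_fun \/ F = (fun j => Some (Nfun j))) ->
  forall k, 1 <= k -> nM F k = Some (Nfun k).
  move=> F hF k; elim: k {-2}k (leqnn k) => [|n IH] k hkn hk; first lia.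
  rewrite nMrec /nM_step.
  case: (leqP k 1) => h1.
    by have -> : k = 1 by lia.
  rewrite (@max_m_cong _ (fun j => Some (Nfun j)) k); last first.
    move=> j hj; apply: IH; lia.
  rewrite core //; case: hF => ->.
    by rewrite /two_fun ifN //; apply/eqP; lia.
  by rewrite /= minnn.
move=> k hk; rewrite !key //; [right | left]; done.
Qed.
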